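(* Let $p\geq 3$ and put $\lambda=\lambda_p=2\cos(\pi/p)$. Every $G_p$-equivalence class of $\lambda$-BQFs contains either only hyperbolic forms or no hyperbolic forms.
   Context: Let $S=\begin{pmatrix}1&\lambda\\0&1\end{pmatrix}$, $T=\begin{pmatrix}0&-1\\1&0\end{pmatrix}$, and $G_p=\langle S,T\rangle/\{\pm I\}$, acting on $\mathbb{C}\cup\{\infty\}$ by linear fractional transformations. An element $\begin{pmatrix}a&b\\c&d\end{pmatrix}$ is hyperbolic if $|a+d|>2$; a hyperbolic fixed point is a real number fixed by a hyperbolic element of $G_p$. A $\lambda$-BQF is $Q(x,y)=Ax^2+Bxy+Cy^2=[A,B,C]$ with $A,B,C\in\mathbb{Z}[\lambda]$ and positive discriminant $B^2-4AC$. For $M=\begin{pmatrix}a&b\\c&d\end{pmatrix}\in G_p$, $(Q\circ M)(x,y)=Q(ax+by,cx+dy)$; $Q$ and $Q'$ are $G_p$-equivalent if $Q'=Q\circ V$ for some $V\in G_p$. For a hyperbolic fixed point $\alpha$, choose a matrix $\begin{pmatrix}a&b\\c&d\end{pmatrix}$ representing a generator of the stabilizer of $\alpha$ in $G_p$, replaced by its inverse if necessary so that $\alpha=\frac{a-d+\sqrt{D}}{2c}$ with $D=(a+d)^2-4$; then $Q_\alpha=[c,d-a,-b]$. A $\lambda$-BQF is hyperbolic if it equals $Q_\alpha$ for some hyperbolic fixed point $\alpha$. *)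

(* Defs.v *)
From Stdlib Require Import Reals ZArith Lra.
Open Scope R_scope.

Record mat := Mat { ma : R; mb : R; mc : R; md : R }.

Definition mmul (M N : mat) : mat :=
  Mat (ma M * ma N + mb M * mc N) (ma M * mb N + mb M * md N)
      (mc M * ma N + md M * mc N) (mc M * mb N + md M * md N).
Definition mid : mat := Mat 1 0 0 1.
Definition mneg (M : mat) : mat := Mat (- ma M) (- mb M) (- mc M) (- md M).
(* inverse of a determinant-1 matrix (all elements of G_p have det 1) *)
Definition minv (M : mat) : mat := Mat (md M) (- mb M) (- mc M) (ma M).

Fixpoint mpow_nat (M : mat) (n : nat) : mat :=
  match n with O => mid | S k => mmul M (mpow_nat M k) end.
Definition mpow (M : mat) (k : Z) : mat :=
  match k with
  | Z0 => mid
  | Zpos p => mpow_nat M (Pos.to_nat p)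
  | Zneg p => mpow_nat (minv M) (Pos.to_nat p)
  end.

Definition lam (p : nat) : R := 2 * cos (PI / INR p).

Definition Smat (p : nat) : mat := Mat 1 (lam p) 0 1.
Definition Tmat : mat := Mat 0 (-1) 1 0.

(* The matrix group <S, T> in SL_2(R); G_p is its image modulo {+-I}. *)
Inductive inGp (p : nat) : mat -> Prop :=
| inGp_id : inGp p mid
| inGp_S  : forall M, inGp p M -> inGp p (mmul (Smat p) M)
| inGp_Si : forall M, inGp p M -> inGp p (mmul (minv (Smat p)) M)
| inGp_T  : forall M, inGp p M -> inGp p (mmul Tmat M)
| inGp_Ti : forall M, inGp p M -> inGp p (mmul (minv Tmat) M).

Definition hyperbolic_mat (M : mat) : Prop := Rabs (ma M + md M) > 2.

Definition fixes (M : mat) (x : R) : Prop :=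
  mc M * x + md M <> 0 /\ (ma M * x + mb M) / (mc M * x + md M) = x.

Definition hyp_fixed_point (p : nat) (alpha : R) : Prop :=
  exists M, inGp p M /\ hyperbolic_mat M /\ fixes M alpha.

Definition stab_generator (p : nat) (alpha : R) (M : mat) : Prop :=
  inGp p M /\ fixes M alpha /\
  forall N, inGp p N -> fixes N alpha ->
    exists k : Z, N = mpow M k \/ N = mneg (mpow M k).

Inductive inZlam (l : R) : R -> Prop :=
| Zl_int : forall z : Z, inZlam l (IZR z)
| Zl_lam : inZlam l l
| Zl_add : forall x y, inZlam l x -> inZlam l y -> inZlam l (x + y)
| Zl_opp : forall x, inZlam l x -> inZlam l (- x)
| Zl_mul : forall x y, inZlam l x -> inZlam l y -> inZlam l (x * y).

(* binary quadratic forms [A, B, C] = A x^2 + B x y + C y^2 *)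
Record bqf := BQF { fA : R; fB : R; fC : R }.

Definition disc (Q : bqf) : R := fB Q * fB Q - 4 * fA Q * fC Q.

Definition lam_BQF (p : nat) (Q : bqf) : Prop :=
  inZlam (lam p) (fA Q) /\ inZlam (lam p) (fB Q) /\ inZlam (lam p) (fC Q)
  /\ disc Q > 0.

(* (Q o M)(x,y) = Q(a x + b y, c x + d y) *)
Definition bqf_act (Q : bqf) (M : mat) : bqf :=
  let a := ma M in let b := mb M in let c := mc M in let d := md M in
  BQF (fA Q * a * a + fB Q * a * c + fC Q * c * c)
      (2 * fA Q * a * b + fB Q * (a * d + b * c) + 2 * fC Q * c * d)
      (fA Q * b * b + fB Q * b * d + fC Q * d * d).

Definition Gp_equiv (p : nat) (Q Q' : bqf) : Prop :=
  exists V, inGp p V /\ Q' = bqf_act Q V.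

Definition is_Q_alpha (p : nat) (alpha : R) (Q : bqf) : Prop :=
  hyp_fixed_point p alpha /\
  exists M, stab_generator p alpha M /\ mc M <> 0 /\
    alpha = (ma M - md M + sqrt ((ma M + md M) ^ 2 - 4)) / (2 * mc M) /\
    Q = BQF (mc M) (md M - ma M) (- mb M).

Definition hyperbolic_BQF (p : nat) (Q : bqf) : Prop :=
  exists alpha, is_Q_alpha p alpha Q.

(* Main.v *)
Require Import Defs.
From Stdlib Require Import Reals Lra Lia Psatz ZArith.
Open Scope R_scope.


Ltac mat_eq := repeat match goal with M : mat |- _ => destruct M end;
  unfold mmul, minv, mneg, mid; simpl; f_equal; ring.

Lemma mmul_assoc A B C : mmul A (mmul B C) = mmul (mmul A B) C.
Proof. mat_eq. Qed.
Lemma mmul_id_l A : mmul mid A = A.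
Proof. mat_eq. Qed.
Lemma mmul_id_r A : mmul A mid = A.
Proof. mat_eq. Qed.
Lemma minv_mmul A B : minv (mmul A B) = mmul (minv B) (minv A).
Proof. mat_eq. Qed.
Lemma minv_minv A : minv (minv A) = A.
Proof. mat_eq. Qed.
Lemma minv_mid : minv mid = mid.
Proof. unfold minv, mid; simpl; f_equal; ring. Qed.
Lemma mmul_neg_r A B : mmul A (mneg B) = mneg (mmul A B).
Proof. mat_eq. Qed.
Lemma mmul_neg_l A B : mmul (mneg A) B = mneg (mmul A B).
Proof. mat_eq. Qed.
Lemma mneg_neg A : mneg (mneg A) = A.
Proof. mat_eq. Qed.

Definition det (M : mat) := ma M * md M - mb M * mc M.

Lemma det_mmul A B : det (mmul A B) = det A * det B.
Proof. destruct A, B; unfold det, mmul; simpl; ring. Qed.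

Lemma mmul_minv_r A : det A = 1 -> mmul A (minv A) = mid.
Proof. destruct A; unfold det, mmul, minv, mid; simpl; intro H; f_equal; lra. Qed.
Lemma mmul_minv_l A : det A = 1 -> mmul (minv A) A = mid.
Proof. destruct A; unfold det, mmul, minv, mid; simpl; intro H; f_equal; lra. Qed.

Lemma inGp_det p M : inGp p M -> det M = 1.
Proof.
  induction 1; try (rewrite det_mmul, IHinGp); unfold det; simpl; ring.
Qed.

Lemma inGp_mul p A B : inGp p A -> inGp p B -> inGp p (mmul A B).
Proof.
  induction 1; intro HB.
  - rewrite mmul_id_l; auto.
  - rewrite <- mmul_assoc; constructor; auto.
  - rewrite <- mmul_assoc; constructor; auto.
  - rewrite <- mmul_assoc; constructor; auto.
  - rewrite <- mmul_assoc; constructor; auto.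
Qed.

Lemma inGp_gen p X : (forall M, inGp p M -> inGp p (mmul X M)) -> inGp p X.
Proof. intro H. rewrite <- (mmul_id_r X). apply H. constructor. Qed.

Lemma inGp_inv p A : inGp p A -> inGp p (minv A).
Proof.
  induction 1.
  - rewrite minv_mid; constructor.
  - rewrite minv_mmul; apply inGp_mul; auto. apply inGp_gen; intros; apply inGp_Si; auto.
  - rewrite minv_mmul, minv_minv; apply inGp_mul; auto. apply inGp_gen; intros; apply inGp_S; auto.
  - rewrite minv_mmul; apply inGp_mul; auto. apply inGp_gen; intros; apply inGp_Ti; auto.
  - rewrite minv_mmul, minv_minv; apply inGp_mul; auto. apply inGp_gen; intros; apply inGp_T; auto.
Qed.

Fixpoint fseq (l : R) (n : nat) : R :=
  match n with
  | O => -1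
  | S O => 0
  | S ((S k) as m) => l * fseq l m - fseq l k
  end.

Lemma fseq_rec l n : fseq l (S (S n)) = l * fseq l (S n) - fseq l n.
Proof. reflexivity. Qed.

Lemma fseq_sin th n :
  fseq (2 * cos th) (S n) * sin th = sin (INR n * th) /\
  fseq (2 * cos th) (S (S n)) * sin th = sin (INR (S n) * th).
Proof.
  induction n as [|n [IH1 IH2]].
  - simpl. replace (0 * th) with 0 by ring. replace (1 * th) with th by ring. rewrite sin_0. split; ring.
  - split; [exact IH2|].
    rewrite fseq_rec.
    replace (INR (S (S n)) * th) with (INR (S n) * th + th) by (rewrite (S_INR (S n)); ring).
    replace (INR n * th) with (INR (S n) * th - th) in IH1 by (rewrite (S_INR n); ring).
    rewrite sin_minus in IH1. rewrite sin_plus.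
    transitivity (2 * cos th * (fseq (2 * cos th) (S (S n)) * sin th) - fseq (2 * cos th) (S n) * sin th);
      [ring|]. rewrite IH1, IH2. ring.
Qed.

Definition Umat (p : nat) : mat := Mat (lam p) (-1) 1 0.
Definition Upow (p j : nat) : mat := mpow_nat (Umat p) j.

Lemma Upow_formula p j :
  Upow p j = Mat (fseq (lam p) (S (S j))) (- fseq (lam p) (S j))
                 (fseq (lam p) (S j)) (- fseq (lam p) j).
Proof.
  induction j.
  - unfold Upow; simpl. unfold mid. f_equal; ring.
  - unfold Upow in *. simpl mpow_nat. rewrite IHj. unfold mmul, Umat; cbn [ma mb mc md].
    rewrite (fseq_rec (lam p) (S j)). f_equal; rewrite ?(fseq_rec (lam p) j); ring.
Qed.

Section Pfacts.
Variable p : nat.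
Hypothesis Hp : (3 <= p)%nat.

Let th := PI / INR p.

Lemma INRp_pos : 0 < INR p.
Proof. apply lt_0_INR; lia. Qed.

Lemma th_pos : 0 < th.
Proof. unfold th. apply Rdiv_lt_0_compat; [exact PI_RGT_0| apply INRp_pos]. Qed.

Lemma kth_lt k : (k < p)%nat -> INR k * th < PI.
Proof.
  intro H. unfold th. pose proof INRp_pos. pose proof PI_RGT_0.
  apply lt_INR in H.
  apply (Rmult_lt_reg_r (INR p)); auto.
  replace (INR k * (PI / INR p) * INR p) with (INR k * PI) by (field; lra). nra.
Qed.

Lemma sin_th_pos : 0 < sin th.
Proof.
  apply sin_gt_0. apply th_pos. pose proof (kth_lt 1). simpl in H. rewrite Rmult_1_l in H. apply H; lia.
Qed.

Lemma lam_eq : lam p = 2 * cos th.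
Proof. reflexivity. Qed.

Lemma lam_pos : 0 < lam p.
Proof.
  rewrite lam_eq. assert (0 < cos th); [|lra].
  apply cos_gt_0. pose proof th_pos; pose proof PI_RGT_0; lra.
  unfold th. pose proof PI_RGT_0. pose proof INRp_pos.
  assert (3 <= INR p) by (replace 3 with (INR 3) by (simpl; ring); apply le_INR; lia).
  apply (Rmult_lt_reg_r (INR p)); auto.
  replace (PI / INR p * INR p) with PI by (field; lra). nra.
Qed.

Lemma fseq_S_eq k : fseq (lam p) (S k) = sin (INR k * th) / sin th.
Proof.
  pose proof sin_th_pos. destruct (fseq_sin th k) as [H1 _].
  rewrite lam_eq. rewrite <- H1. field. lra.
Qed.

Lemma fseq_pos k : (1 <= k)%nat -> (k < p)%nat -> 0 < fseq (lam p) (S k).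
Proof.
  intros H1 H2. rewrite fseq_S_eq. pose proof sin_th_pos.
  apply Rdiv_lt_0_compat; auto. apply sin_gt_0.
  - apply Rmult_lt_0_compat; [apply lt_0_INR; lia| apply th_pos].
  - apply kth_lt; auto.
Qed.

Lemma fseq_p1 : fseq (lam p) (S p) = 0.
Proof.
  rewrite fseq_S_eq. unfold th. replace (INR p * (PI / INR p)) with PI.
  rewrite sin_PI. unfold Rdiv; lra. field. pose proof INRp_pos. lra.
Qed.

Lemma fseq_nn k : (k <= p)%nat -> 0 <= fseq (lam p) (S k).
Proof.
  intros H. destruct k. { simpl. lra. }
  destruct (Nat.eq_dec (S k) p).
  - rewrite e. apply Req_le. symmetry. exact fseq_p1.
  - left. apply fseq_pos; lia.
Qed.

Lemma fseq_p : fseq (lam p) p = 1.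
Proof.
  pose proof INRp_pos as Hpos. pose proof sin_th_pos.
  assert (E: INR (p-1) * th = PI - th).
  { rewrite minus_INR by lia. unfold th. simpl. field. lra. }
  replace p with (S (p-1)) at 2 by lia.
  rewrite fseq_S_eq, E, sin_PI_x. field. lra.
Qed.

Lemma Upow_p : Upow p p = mneg mid.
Proof.
  rewrite Upow_formula. rewrite fseq_rec, fseq_p1, fseq_p.
  unfold mneg, mid; simpl. f_equal; ring.
Qed.

Lemma Upow_pm1 : Upow p (p - 1) = Mat 0 (-1) 1 (- lam p).
Proof.
  rewrite Upow_formula. replace (S (S (p - 1))) with (S p) by lia.
  replace (S (p-1)) with p by lia. rewrite fseq_p1, fseq_p.
  assert (fseq (lam p) (p - 1) = lam p).
  { pose proof (fseq_rec (lam p) (p - 1)). replace (S (S (p - 1))) with (S p) in H by lia.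
    replace (S (p-1)) with p in H by lia. rewrite fseq_p1, fseq_p in H. lra. }
  rewrite H. reflexivity.
Qed.

End Pfacts.

Definition ap1 (M : mat) (x y : R) := ma M * x + mb M * y.
Definition ap2 (M : mat) (x y : R) := mc M * x + md M * y.

Lemma ap1_mmul A B x y : ap1 (mmul A B) x y = ap1 A (ap1 B x y) (ap2 B x y).
Proof. destruct A, B; unfold ap1, ap2, mmul; simpl; ring. Qed.
Lemma ap2_mmul A B x y : ap2 (mmul A B) x y = ap2 A (ap1 B x y) (ap2 B x y).
Proof. destruct A, B; unfold ap1, ap2, mmul; simpl; ring. Qed.

Definition inN (x y : R) := x * y < 0.
Definition inP (x y : R) := 0 < x * y.
Definition inPj (l : R) (j : nat) (x y : R) :=
  if Nat.eqb j 1 then 0 < y * (x - l * y) else (0 < x * y /\ y * (x - l * y) < 0).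

Section PP.
Variable p : nat.
Hypothesis Hp : (3 <= p)%nat.

Inductive stT : mat -> Prop :=
| stT1 : stT Tmat
| stT2 : forall j h, stU j h -> stT (mmul Tmat h)
with stU : nat -> mat -> Prop :=
| stU1 : forall j, (1 <= j)%nat -> (j < p)%nat -> stU j (Upow p j)
| stU2 : forall j h, (1 <= j)%nat -> (j < p)%nat -> stT h -> stU j (mmul (Upow p j) h).

Scheme stT_ind2 := Minimality for stT Sort Prop
with stU_ind2 := Minimality for stU Sort Prop.

Definition PT (h : mat) :=
  (forall x y, inP x y -> inN (ap1 h x y) (ap2 h x y)) \/
  (forall x y, inN x y -> inN (ap1 h x y) (ap2 h x y)).
Definition PU (j : nat) (h : mat) :=
  (forall x y, inP x y -> inPj (lam p) j (ap1 h x y) (ap2 h x y)) \/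
  (forall x y, inN x y -> inPj (lam p) j (ap1 h x y) (ap2 h x y)).

Lemma T_PN x y : inP x y -> inN (ap1 Tmat x y) (ap2 Tmat x y).
Proof. unfold inP, inN, ap1, ap2, Tmat; simpl. nra. Qed.
Lemma T_NP x y : inN x y -> inP (ap1 Tmat x y) (ap2 Tmat x y).
Proof. unfold inP, inN, ap1, ap2, Tmat; simpl. nra. Qed.

Lemma Pj_P j x y : (1 <= j)%nat -> inPj (lam p) j x y -> inP x y.
Proof.
  unfold inPj, inP. destruct (Nat.eqb j 1); intros _ H; [|tauto].
  pose proof (lam_pos p Hp). nra.
Qed.

Lemma U_N j x y : (1 <= j)%nat -> (j < p)%nat -> inN x y ->
  inPj (lam p) j (ap1 (Upow p j) x y) (ap2 (Upow p j) x y).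
Proof.
  intros H1 H2 HN. unfold inN in HN. rewrite Upow_formula. unfold ap1, ap2, inPj; cbn [ma mb mc md].
  destruct (Nat.eqb_spec j 1) as [E|E].
  - subst j. simpl. nra.
  - set (A := fseq (lam p) (S (S j))). set (B := fseq (lam p) (S j)).
    set (C := fseq (lam p) j).
    destruct j as [|j]; [lia|]. 
    set (D := fseq (lam p) j).
    assert (HA : 0 <= A) by (apply fseq_nn; lia).
    assert (HB : 0 < B) by (apply fseq_pos; lia).
    assert (HC : 0 < C) by (unfold C; destruct j; [lia|]; apply fseq_pos; lia).
    assert (HD : 0 <= D) by (unfold D; destruct j; [lia|]; apply fseq_nn; lia).
    assert (RA : A = lam p * B - C) by (unfold A, B, C; apply fseq_rec).
    assert (RB : B = lam p * C - D) by (unfold B, C, D; apply fseq_rec).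
    assert (Hx : 0 < x * x) by nra.
    assert (Hy : 0 < y * y) by nra.
    split.
    + assert (0 <= A * B * (x * x)) by (apply Rmult_le_pos; [apply Rmult_le_pos; lra| lra]).
      assert (0 <= A * C * (- (x*y))) by (apply Rmult_le_pos; [apply Rmult_le_pos; lra| lra]).
      assert (0 < B * B * (- (x*y))) by (apply Rmult_lt_0_compat; [apply Rmult_lt_0_compat; lra| lra]).
      assert (0 <= B * C * (y * y)) by (apply Rmult_le_pos; [apply Rmult_le_pos; lra| lra]).
      replace ((A * x + - B * y) * (B * x + - C * y)) with
        (A * B * (x * x) + A * C * (- (x*y)) + B * B * (- (x*y)) + B * C * (y * y)) by ring.
      lra.
    + assert (0 < B * C * (x * x)) by (apply Rmult_lt_0_compat; [apply Rmult_lt_0_compat; lra| lra]).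
      assert (0 <= B * D * (- (x*y))) by (apply Rmult_le_pos; [apply Rmult_le_pos; lra| lra]).
      assert (0 <= C * C * (- (x*y))) by (apply Rmult_le_pos; [apply Rmult_le_pos; lra| lra]).
      assert (0 <= C * D * (y * y)) by (apply Rmult_le_pos; [apply Rmult_le_pos; lra| lra]).
      assert (Ex : (B * x + - C * y) * (A * x + - B * y - lam p * (B * x + - C * y)) =
        - (B * C * (x * x)) - B * D * (- (x*y)) - C * C * (- (x*y)) - C * D * (y * y)).
      { rewrite RA. replace D with (lam p * C - B) by lra. ring. }
      lra.
Qed.

Lemma st_sem : (forall h, stT h -> PT h) /\ (forall j h, stU j h -> (1 <= j)%nat /\ PU j h).
Proof.
  split.
  - apply (stT_ind2 PT (fun j h => (1 <= j)%nat /\ PU j h)).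
    + left. apply T_PN.
    + intros j h _ [Hj [IH|IH]]; unfold PT.
      * left. intros x y H. rewrite ap1_mmul, ap2_mmul. apply T_PN. eapply Pj_P; eauto.
      * right. intros x y H. rewrite ap1_mmul, ap2_mmul. apply T_PN. eapply Pj_P; eauto.
    + intros j H1 H2. split; auto. right. intros. apply U_N; auto.
    + intros j h H1 H2 _ [IH|IH]; split; auto; unfold PU.
      * left. intros x y H. rewrite ap1_mmul, ap2_mmul. apply U_N; auto.
      * right. intros x y H. rewrite ap1_mmul, ap2_mmul. apply U_N; auto.
  - apply (stU_ind2 PT (fun j h => (1 <= j)%nat /\ PU j h)).
    + left. apply T_PN.
    + intros j h _ [Hj [IH|IH]]; unfold PT.
      * left. intros x y H. rewrite ap1_mmul, ap2_mmul. apply T_PN. eapply Pj_P; eauto.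
      * right. intros x y H. rewrite ap1_mmul, ap2_mmul. apply T_PN. eapply Pj_P; eauto.
    + intros j H1 H2. split; auto. right. intros. apply U_N; auto.
    + intros j h H1 H2 _ [IH|IH]; split; auto; unfold PU.
      * left. intros x y H. rewrite ap1_mmul, ap2_mmul. apply U_N; auto.
      * right. intros x y H. rewrite ap1_mmul, ap2_mmul. apply U_N; auto.
Qed.

Definition cls (h : mat) := h = mid \/ stT h \/ exists j, stU j h.
Definition NF (g : mat) := exists h, (g = h \/ g = mneg h) /\ cls h.

Lemma NF_neg g : NF g -> NF (mneg g).
Proof.
  intros [h [[E|E] Hc]]; exists h; split; auto; subst; [right|left]; auto. apply mneg_neg.
Qed.

Lemma NF_cls h : cls h -> NF h.
Proof. intro H; exists h; auto. Qed.

Lemma TT : mmul Tmat Tmat = mneg mid.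
Proof. unfold mmul, Tmat, mneg, mid; simpl; f_equal; ring. Qed.

Lemma NF_T_cls h : cls h -> NF (mmul Tmat h).
Proof.
  intros [E|[H|[j H]]].
  - subst. rewrite mmul_id_r. apply NF_cls. right; left; constructor.
  - inversion H; subst.
    + rewrite TT. apply NF_neg, NF_cls. left; auto.
    + rewrite mmul_assoc, TT, mmul_neg_l, mmul_id_l. apply NF_neg, NF_cls.
      right; right; eauto.
  - apply NF_cls. right; left. econstructor; eauto.
Qed.

Lemma NF_T g : NF g -> NF (mmul Tmat g).
Proof.
  intros [h [[E|E] Hc]]; subst. apply NF_T_cls; auto.
  rewrite mmul_neg_r. apply NF_neg, NF_T_cls; auto.
Qed.

Lemma NF_U_cls h : cls h -> NF (mmul (Umat p) h).
Proof.
  intros [E|[H|[j H]]].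
  - subst. apply NF_cls. right; right. exists 1%nat.
    change (mmul (Umat p) mid) with (Upow p 1). constructor; lia.
  - apply NF_cls. right; right. exists 1%nat.
    replace (mmul (Umat p) h) with (mmul (Upow p 1) h).
    constructor; auto; lia. unfold Upow; simpl. rewrite mmul_id_r; auto.
  - inversion H; subst.
    + change (mmul (Umat p) (Upow p j)) with (Upow p (S j)).
      destruct (Nat.eq_dec (S j) p) as [E|E].
      * rewrite E, Upow_p by auto. apply NF_neg, NF_cls. left; auto.
      * apply NF_cls. right; right. exists (S j). constructor; lia.
    + rewrite mmul_assoc. change (mmul (Umat p) (Upow p j)) with (Upow p (S j)).
      destruct (Nat.eq_dec (S j) p) as [E|E].
      * rewrite E, Upow_p, mmul_neg_l, mmul_id_l by auto. apply NF_neg, NF_cls. right; left; auto.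
      * apply NF_cls. right; right. exists (S j). constructor; auto; lia.
Qed.

Lemma NF_U g : NF g -> NF (mmul (Umat p) g).
Proof.
  intros [h [[E|E] Hc]]; subst. apply NF_U_cls; auto.
  rewrite mmul_neg_r. apply NF_neg, NF_U_cls; auto.
Qed.

Lemma NF_Upow k g : NF g -> NF (mmul (Upow p k) g).
Proof.
  induction k; intro H.
  - unfold Upow; simpl. rewrite mmul_id_l; auto.
  - unfold Upow; simpl. rewrite <- mmul_assoc. apply NF_U. apply IHk; auto.
Qed.

Lemma S_UT : Smat p = mneg (mmul (Umat p) Tmat).
Proof. unfold Smat, Umat, Tmat, mmul, mneg; simpl; f_equal; ring. Qed.

Lemma Si_TU : minv (Smat p) = mneg (mmul Tmat (Upow p (p - 1))).
Proof. rewrite Upow_pm1 by auto. unfold Smat, Tmat, mmul, mneg, minv; simpl; f_equal; ring. Qed.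

Lemma inGp_NF g : inGp p g -> NF g.
Proof.
  induction 1.
  - apply NF_cls; left; auto.
  - rewrite S_UT, mmul_neg_l, <- mmul_assoc. apply NF_neg, NF_U, NF_T; auto.
  - rewrite Si_TU, mmul_neg_l, <- mmul_assoc. apply NF_neg, NF_T, NF_Upow; auto.
  - apply NF_T; auto.
  - replace (minv Tmat) with (mneg Tmat) by (unfold minv, mneg, Tmat; simpl; f_equal; ring).
    rewrite mmul_neg_l. apply NF_neg, NF_T; auto.
Qed.

Lemma no_small_translation X : inGp p X -> ma X = 1 -> md X = 1 -> mc X = 0 ->
  0 < mb X < lam p -> False.
Proof.
  intros HX Ha Hd Hc Hb.
  destruct (inGp_NF X HX) as [h [Eh Hcl]].
  set (t := mb X) in *.
  assert (K1 : forall x y, ap1 X x y = x + t * y) by (intros; unfold ap1; rewrite Ha; unfold t; ring).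
  assert (K2 : forall x y, ap2 X x y = y) by (intros; unfold ap2; rewrite Hc, Hd; ring).
  assert (G : forall x y, (ap1 h x y = x + t * y /\ ap2 h x y = y) \/
                          (ap1 h x y = - (x + t * y) /\ ap2 h x y = - y)).
  { intros. destruct Eh as [E|E]; [left|right].
    - rewrite <- E; split; [apply K1|apply K2].
    - pose proof (K1 x y) as A1; pose proof (K2 x y) as A2. rewrite E in A1, A2. destruct h; unfold ap1, ap2, mneg in *; simpl in *; split; lra. }

  pose proof (lam_pos p Hp) as Hl.
  destruct Hcl as [E|[H|[j H]]].
  - subst h. pose proof (K1 0 1) as A1. destruct Eh as [E|E]; rewrite E in A1; unfold ap1, mid, mneg in A1; simpl in A1; lra.
  - destruct (proj1 st_sem h H) as [S|S].
    + specialize (S 1 1). specialize (G 1 1). unfold inP, inN in S.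
      destruct G as [[G1 G2]|[G1 G2]]; rewrite G1, G2 in S; nra.
    + specialize (S (- t / 2) 1). specialize (G (- t / 2) 1). unfold inP, inN in S.
      destruct G as [[G1 G2]|[G1 G2]]; rewrite G1, G2 in S; nra.
  - destruct (proj2 st_sem j h H) as [Hj [S|S]]; unfold inPj in S;
      destruct (Nat.eqb j 1).
    + specialize (S (lam p - t) 1). specialize (G (lam p - t) 1). unfold inP in S.
      destruct G as [[G1 G2]|[G1 G2]]; rewrite G1, G2 in S; nra.
    + specialize (S (lam p) 1). specialize (G (lam p) 1). unfold inP in S.
      destruct G as [[G1 G2]|[G1 G2]]; rewrite G1, G2 in S; nra.
    + specialize (S (- t - 1) 1). specialize (G (- t - 1) 1). unfold inN in S.
      destruct G as [[G1 G2]|[G1 G2]]; rewrite G1, G2 in S; nra.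
    + specialize (S (- t - 1) 1). specialize (G (- t - 1) 1). unfold inN in S.
      destruct G as [[G1 G2]|[G1 G2]]; rewrite G1, G2 in S; nra.
Qed.

End PP.

Lemma upper_tri_not_hyp p (Hp : (3 <= p)%nat) g :
  inGp p g -> mc g = 0 -> Rabs (ma g + md g) > 2 -> False.
Proof.
  intros Hg Hc Htr.
  pose proof (inGp_det p g Hg) as Hdet. unfold det in Hdet. rewrite Hc in Hdet.
  assert (Had : ma g * md g = 1) by lra.
  assert (Hsq : (ma g + md g) * (ma g + md g) > 4).
  { unfold Rabs in Htr. destruct (Rcase_abs (ma g + md g)); nra. }
  pose proof (lam_pos p Hp) as Hl.
  destruct g as [a b c d]; simpl in *. subst c.
  destruct (Rlt_or_le (a * a) 1) as [Ha|Ha].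
  - apply (no_small_translation p Hp (mmul (Mat a b 0 d) (mmul (Smat p) (minv (Mat a b 0 d))))).
    + apply inGp_mul; auto. apply inGp_mul. apply inGp_gen; intros; apply inGp_S; auto.
      apply inGp_inv; auto.
    + unfold mmul, minv, Smat; simpl. nra.
    + unfold mmul, minv, Smat; simpl. nra.
    + unfold mmul, minv, Smat; simpl. nra.
    + unfold mmul, minv, Smat; simpl.
      match goal with |- 0 < ?e < _ => replace e with (a * a * lam p) by ring end.
      assert (a <> 0) by (intro; subst; lra).
      assert (0 < a * a) by (pose proof (Rsqr_pos_lt a H); unfold Rsqr in *; lra). split; nra.
  - assert (Hd : d * d < 1).
    { assert (a * a <> 1) by (intro E; assert (d = a) by nra; subst; nra). nra. }
    apply (no_small_translation p Hp (mmul (minv (Mat a b 0 d)) (mmul (Smat p) (Mat a b 0 d)))).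
    + apply inGp_mul. apply inGp_inv; auto. apply inGp_mul; auto.
      apply inGp_gen; intros; apply inGp_S; auto.
    + unfold mmul, minv, Smat; simpl. nra.
    + unfold mmul, minv, Smat; simpl. nra.
    + unfold mmul, minv, Smat; simpl. nra.
    + unfold mmul, minv, Smat; simpl.
      assert (d <> 0) by (intro; subst; lra).
      assert (0 < d * d) by (pose proof (Rsqr_pos_lt d H); unfold Rsqr in *; lra).
      match goal with |- 0 < ?e < _ => replace e with (d * d * lam p) by ring end.
      split; nra.
Qed.

Definition eig (M : mat) (x mu : R) := ap1 M x 1 = mu * x /\ ap2 M x 1 = mu.

Lemma fixes_eig M x : fixes M x -> eig M x (mc M * x + md M) /\ mc M * x + md M <> 0.
Proof.
  intros [Hn He]. split; auto. unfold eig, ap1, ap2. split; [|ring].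
  assert (E : ma M * x + mb M = (ma M * x + mb M) / (mc M * x + md M) * (mc M * x + md M))
    by (field; auto).
  rewrite He in E. rewrite Rmult_1_r, E. ring.
Qed.

Lemma eig_fixes M x mu : eig M x mu -> mu <> 0 -> fixes M x.
Proof.
  unfold eig, ap1, ap2, fixes. rewrite !Rmult_1_r. intros [E1 E2] Hmu. rewrite E2, E1. split; auto.
  field; auto.
Qed.

Lemma ap_scale M k x y : ap1 M (k * x) (k * y) = k * ap1 M x y /\ ap2 M (k * x) (k * y) = k * ap2 M x y.
Proof. unfold ap1, ap2; split; ring. Qed.

Lemma back_V V x : det V = 1 -> ap2 (minv V) x 1 <> 0 ->
  ap1 V (ap1 (minv V) x 1 / ap2 (minv V) x 1) 1 = / ap2 (minv V) x 1 * x /\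
  ap2 V (ap1 (minv V) x 1 / ap2 (minv V) x 1) 1 = / ap2 (minv V) x 1 * 1.
Proof.
  destruct V as [e f g h]. unfold det, ap1, ap2, minv; simpl. intros Hd Hn.
  split.
  - transitivity (x * (e * h - f * g) / (- g * x + e * 1)); [field; intro; apply Hn; lra|]. rewrite Hd. field; intro; apply Hn; lra.
  - transitivity ((e * h - f * g) / (- g * x + e * 1)); [field; intro; apply Hn; lra|]. rewrite Hd. field; intro; apply Hn; lra.
Qed.

Lemma eig_conj V M x mu : det V = 1 -> ap2 (minv V) x 1 <> 0 -> eig M x mu ->
  eig (mmul (minv V) (mmul M V)) (ap1 (minv V) x 1 / ap2 (minv V) x 1) mu.
Proof.
  intros Hd Hn [E1 E2].
  destruct (back_V V x Hd Hn) as [B1 B2].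
  set (nu := ap2 (minv V) x 1) in *.
  set (x' := ap1 (minv V) x 1 / nu) in *.
  unfold eig. repeat rewrite ?ap1_mmul, ?ap2_mmul. rewrite B1, B2.
  destruct (ap_scale M (/ nu) x 1) as [S1 S2]. rewrite S1, S2, E1, E2.
  replace (/ nu * (mu * x)) with (mu / nu * x) by (field; auto).
  replace (/ nu * mu) with (mu / nu * 1) by (field; auto).
  destruct (ap_scale (minv V) (mu / nu) x 1) as [S3 S4]. rewrite S3, S4.
  fold nu. unfold x'. split; field; auto.
Qed.

Lemma conj_mul V A B : det V = 1 ->
  mmul (mmul (minv V) (mmul A V)) (mmul (minv V) (mmul B V)) = mmul (minv V) (mmul (mmul A B) V).
Proof.
  intro Hd. rewrite <- !mmul_assoc. rewrite (mmul_assoc V (minv V)), mmul_minv_r, mmul_id_l by auto.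
  reflexivity.
Qed.

Lemma conj_pow_nat V M n : det V = 1 ->
  mpow_nat (mmul (minv V) (mmul M V)) n = mmul (minv V) (mmul (mpow_nat M n) V).
Proof.
  intro Hd. induction n; simpl.
  - rewrite mmul_id_l, mmul_minv_l; auto.
  - rewrite IHn, conj_mul; auto.
Qed.

Lemma conj_minv V M : minv (mmul (minv V) (mmul M V)) = mmul (minv V) (mmul (minv M) V).
Proof. rewrite !minv_mmul, minv_minv, mmul_assoc. reflexivity. Qed.

Lemma conj_pow V M k : det V = 1 ->
  mpow (mmul (minv V) (mmul M V)) k = mmul (minv V) (mmul (mpow M k) V).
Proof.
  intro Hd. destruct k; simpl.
  - rewrite mmul_id_l, mmul_minv_l; auto.
  - apply conj_pow_nat; auto.
  - rewrite conj_minv. apply conj_pow_nat; auto.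
Qed.

Lemma conj_neg V X : mmul V (mmul (mneg X) (minv V)) = mneg (mmul V (mmul X (minv V))).
Proof. rewrite mmul_neg_l, mmul_neg_r. reflexivity. Qed.

Lemma trace_conj V X : ma (mmul (minv V) (mmul X V)) + md (mmul (minv V) (mmul X V)) =
  (ma X + md X) * det V.
Proof. destruct V, X; unfold det, mmul, minv; simpl; ring. Qed.

Lemma mc_pow_nat A n : mc A = 0 -> mc (mpow_nat A n) = 0.
Proof. intro H. induction n; simpl; auto. rewrite H, IHn. ring. Qed.

Lemma mc_pow A k : mc A = 0 -> mc (mpow A k) = 0.
Proof.
  intro H. destruct k; simpl; auto. apply mc_pow_nat; auto.
  apply mc_pow_nat. simpl. rewrite H; ring.
Qed.

Lemma bqf_act_comp Q A B : bqf_act (bqf_act Q A) B = bqf_act Q (mmul A B).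
Proof. destruct Q, A, B; unfold bqf_act, mmul; simpl; f_equal; ring. Qed.

Lemma bqf_act_id Q : bqf_act Q mid = Q.
Proof. destruct Q; unfold bqf_act, mid; simpl; f_equal; ring. Qed.

Lemma transfer p (Hp : (3 <= p)%nat) Q V :
  inGp p V -> hyperbolic_BQF p Q -> hyperbolic_BQF p (bqf_act Q V).
Proof.
  intros HV [alpha [[M0 [HM0 [Hh0 Hf0]]] [M [[HM [Hfix Hgen]] [Hc [Halpha HQ]]]]]].
  pose proof (inGp_det _ _ HV) as HdV.
  assert (HW : inGp p (minv V)) by (apply inGp_inv; auto).
  set (W := minv V) in *.
  set (M' := mmul W (mmul M V)).
  assert (HM' : inGp p M') by (apply inGp_mul; [|apply inGp_mul]; auto).
  destruct (fixes_eig M alpha Hfix) as [[Eq1 Eq2] Hmu].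
  assert (Hq : ma M * alpha + mb M = alpha * (mc M * alpha + md M)).
  { unfold ap1, ap2 in Eq1. lra. }
  assert (Hc' : mc M' <> 0).
  { intro Hc0. destruct (Hgen M0 HM0 Hf0) as [k Hk].
    apply (upper_tri_not_hyp p Hp (mmul W (mmul M0 V))).
    - apply inGp_mul; [|apply inGp_mul]; auto.
    - destruct Hk as [E|E]; rewrite E; [|rewrite mmul_neg_l, mmul_neg_r]; unfold W;
        rewrite <- conj_pow by auto.
      + apply mc_pow; auto.
      + simpl. rewrite mc_pow; auto. ring.
    - unfold W. rewrite trace_conj, HdV, Rmult_1_r. exact Hh0. }
  assert (Hnu : ap2 W alpha 1 <> 0).
  { intro E. apply Hc'. unfold M', W in *. clear - E Hq.
    destruct V as [e f g h], M as [a b c d]. unfold ap2, minv, mmul in *; simpl in *.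
    replace e with (g * alpha) by lra.
    transitivity (g * g * (c * alpha * alpha + (d - a) * alpha - b)); [ring|].
    replace (c * alpha * alpha + (d - a) * alpha - b) with 0 by nra. ring. }
  set (alpha' := ap1 W alpha 1 / ap2 W alpha 1).
  assert (HfM' : fixes M' alpha').
  { apply (eig_fixes _ _ (mc M * alpha + md M)); auto. unfold M', alpha', W.
    apply eig_conj; auto. split; auto. }
  exists alpha'. split.
  - exists (mmul W (mmul M0 V)). split; [|split].
    + apply inGp_mul; [|apply inGp_mul]; auto.
    + unfold hyperbolic_mat, W. rewrite trace_conj, HdV, Rmult_1_r. exact Hh0.
    + destruct (fixes_eig M0 alpha Hf0) as [He Hn0].
      apply (eig_fixes _ _ _ (eig_conj V M0 alpha _ HdV Hnu He) Hn0).
  - exists M'. split; [split; [auto|split; [auto|]]|split; [auto|split]].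
    + intros N HN HfN.
      destruct (fixes_eig N alpha' HfN) as [HeN HnN].
      assert (HdW : det W = 1).
      { unfold W. clear - HdV. destruct V; unfold det, minv in *; simpl in *. lra. }
      destruct (back_V V alpha HdV Hnu) as [B1 B2]. fold W in B1, B2. fold alpha' in B1, B2.
      assert (HnV : ap2 (minv W) alpha' 1 <> 0).
      { unfold W; rewrite minv_minv. fold W. rewrite B2. rewrite Rmult_1_r.
        apply Rinv_neq_0_compat; auto. }
      pose proof (eig_conj W N alpha' _ HdW HnV HeN) as HE.
      unfold W in HE at 1 3 4. rewrite minv_minv in HE. fold W in HE.
      rewrite B1, B2 in HE.
      replace (/ ap2 W alpha 1 * alpha / (/ ap2 W alpha 1 * 1)) with alpha in HE
        by (field; auto).
      assert (HN'' : inGp p (mmul V (mmul N W))) by (apply inGp_mul; [|apply inGp_mul]; auto).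
      destruct (Hgen _ HN'' (eig_fixes _ _ _ HE HnN)) as [k Hk].
      assert (EN : N = mmul W (mmul (mmul V (mmul N W)) V)).
      { rewrite <- !mmul_assoc. unfold W. rewrite mmul_minv_l, mmul_id_r by auto.
        rewrite mmul_assoc, mmul_minv_l, mmul_id_l by auto. reflexivity. }
      exists k. unfold M', W. rewrite conj_pow by auto. fold W.
      destruct Hk as [E|E]; rewrite E in EN; [left|right]; rewrite EN; auto.
      rewrite mmul_neg_l, mmul_neg_r. reflexivity.
    + assert (Htr' : ma M' + md M' = ma M + md M) by (unfold M', W; rewrite trace_conj, HdV; ring).
      rewrite Htr'.
      set (r := sqrt ((ma M + md M) ^ 2 - 4)) in *.
      assert (Hr : r = 2 * mc M * alpha - ma M + md M) by (rewrite Halpha; field; auto).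
      rewrite Hr.
      assert (Key : 2 * mc M' * ap1 W alpha 1 + (md M' - ma M') * ap2 W alpha 1 =
                    (2 * mc M * alpha + md M - ma M) * ap2 W alpha 1).
      { unfold M', W. clear - HdV Hq. destruct V as [e f g h], M as [a b c d].
        unfold ap1, ap2, det, mmul, minv in *; simpl in *.
        assert (Hq' : c * alpha * alpha + (d - a) * alpha - b = 0) by nra.
        match goal with |- ?L = ?R =>
          assert (E : L - R = (e * h - f * g - 1) *
             (2 * c * alpha * e + (d - a) * (g * alpha + e) - 2 * b * g) +
             2 * g * (c * alpha * alpha + (d - a) * alpha - b)) by ring end.
        rewrite HdV, Hq' in E. lra. }
      unfold alpha'.
      apply (Rmult_eq_reg_r (2 * mc M' * ap2 W alpha 1)).
      2: { repeat apply Rmult_integral_contrapositive_currified; auto; try discrR. }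
      replace (ap1 W alpha 1 / ap2 W alpha 1 * (2 * mc M' * ap2 W alpha 1)) with
        (2 * mc M' * ap1 W alpha 1) by (field; auto).
      replace ((ma M' - md M' + (2 * mc M * alpha - ma M + md M)) / (2 * mc M') *
         (2 * mc M' * ap2 W alpha 1)) with
        ((ma M' - md M' + (2 * mc M * alpha - ma M + md M)) * ap2 W alpha 1) by (field; auto).
      nra.
    + rewrite HQ. unfold M', W. clear - HdV. destruct V, M; unfold bqf_act, mmul, minv, det in *; simpl in *.
      f_equal; ring.
Qed.

Theorem corollary3p4 (p : nat) (Hp : (3 <= p)%nat) (Q Q' : bqf) :
  lam_BQF p Q -> lam_BQF p Q' -> Gp_equiv p Q Q' ->
  (hyperbolic_BQF p Q <-> hyperbolic_BQF p Q').
Proof.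
  intros _ _ [V [HV E]]. split; intro H.
  - rewrite E. apply transfer; auto.
  - assert (EQ : Q = bqf_act Q' (minv V)).
    { rewrite E, bqf_act_comp, mmul_minv_r, bqf_act_id; auto. apply (inGp_det p); auto. }
    rewrite EQ. apply transfer; auto. apply inGp_inv; auto.
Qed.
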